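(* Let $Y(0),Y(1)$ be integrable real-valued potential outcomes and $X$ a random vector in $\mathbb{R}^{d_X}$ with support $\mathcal{X}$. Suppose: (Deterministic treatment) $\mathcal{X}=\mathcal{X}_0\cup\mathcal{X}_1$ with $\mathcal{X}_0\cap\mathcal{X}_1=\emptyset$, the treatment is $D=1\{X\in\mathcal{X}_1\}$ and the observed outcome is $Y=DY(1)+(1-D)Y(0)$; (Continuity) the functions $x\mapsto E[Y(0)|X=x]$ and $x\mapsto E[Y(1)|X=x]$ are continuous on $\mathcal{X}$; (Comonotonicity) for all $x_1,x_2\in\mathcal{X}$, $$E[Y(0)|X=x_1]\geq E[Y(0)|X=x_2]\iff E[Y(1)|X=x_1]\geq E[Y(1)|X=x_2].$$ Let $\mathcal{F}=\mathrm{cl}(\mathrm{int}(\mathcal{X}_1))\cap\mathrm{cl}(\mathrm{int}(\mathcal{X}_0))$ and, for $d\in\{0,1\}$, let $g_d$ be a function on $\mathcal{X}_d\cup\mathcal{F}$ such that $g_d(x)=E[Y|X=x]$ for all $x\in\mathcal{X}_d$ and $g_d$ is continuous at each point of $\mathcal{F}$. Then: (i) if $d\in\{0,1\}$, $x\in\mathcal{X}_d$ and there exists $x^*\in\mathcal{F}$ with $E[Y|X=x]=g_d(x^* )$, then $E[Y(1)|X=x]=g_1(x^* )$ and $E[Y(0)|X=x]=g_0(x^* )$; (ii) for any $x_1,x_2\in\mathcal{F}$, $g_0(x_1)\geq g_0(x_2)\iff g_1(x_1)\geq g_1(x_2)$.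
   Context: Conditional expectation functions $x\mapsto E[Y(d)|X=x]$ are understood as the unique continuous versions. For $x\in\mathcal{X}_d$, $E[Y|X=x]$ is understood as $E[Y(d)|X=x]$ (since $Y=Y(d)$ when $X\in\mathcal{X}_d$). $\mathrm{int}$ and $\mathrm{cl}$ denote interior and closure in $\mathbb{R}^{d_X}$; $\mathcal{F}$ is called the frontier. *)

(* Defs.v *)
From HB Require Import structures.
From mathcomp Require Import all_boot all_order all_algebra.
From mathcomp Require Import all_classical all_reals all_analysis.
Set Implicit Arguments. Unset Strict Implicit. Unset Printing Implicit Defensive.
Import Order.TTheory GRing.Theory Num.Theory.
Import numFieldNormedType.Exports.
Local Open Scope classical_set_scope.
Local Open Scope ring_scope.

Definition rV_borel (R : realType) (n : nat) : set (set 'rV[R]_n) :=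
  <<s (@open 'rV[R]_n) >>.

Section ProbDefs.
Context (R : realType) (d : measure_display) (T : measurableType d)
  (P : probability T R) (n : nat).

Definition random_vector (X : T -> 'rV[R]_n) : Prop :=
  forall B, rV_borel B -> measurable (X @^-1` B).

(* Support of the law of X: points all of whose open neighbourhoods have
   positive probability (= smallest closed set of full probability). *)
Definition law_support (X : T -> 'rV[R]_n) : set 'rV[R]_n :=
  [set x | forall U : set 'rV[R]_n, open U -> U x -> (0 < P (X @^-1` U))%E].

Definition cond_exp_version (Z : T -> R) (X : T -> 'rV[R]_n)
    (m : 'rV[R]_n -> R) : Prop :=
  (forall B : set R, measurable B -> rV_borel (m @^-1` B)) /\
  forall B, rV_borel B ->
    (\int[P]_(w in X @^-1` B) (Z w)%:E = \int[P]_(w in X @^-1` B) (m (X w))%:E)%E.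
End ProbDefs.

Definition frontier_set (R : realType) (n : nat) (X0 X1 : set 'rV[R]_n)
  : set 'rV[R]_n :=
  closure (interior X1) `&` closure (interior X0).

(* Main.v *)
Require Import Defs.
From HB Require Import structures.
From mathcomp Require Import all_boot all_order all_algebra.
From mathcomp Require Import all_classical all_reals all_analysis.
Import Order.TTheory GRing.Theory Num.Theory.
Import numFieldNormedType.Exports.
Local Open Scope classical_set_scope.
Local Open Scope ring_scope.

(* Index d : bool, with false = 0 (control) and true = 1 (treated). *)
Theorem theorem2 (R : realType) (dm : measure_display) (T : measurableType dm)
  (P : probability T R) (n : nat)
  (Y : bool -> T -> R) (X : T -> 'rV[R]_n)
  (Xd : bool -> set 'rV[R]_n)
  (m : bool -> 'rV[R]_n -> R)
  (g : bool -> 'rV[R]_n -> R) :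
  (* integrable potential outcomes, random vector X *)
  (forall b, P.-integrable setT (fun w => (Y b w)%:E)) ->
  random_vector X ->
  (* m b is the (continuous version of) x |-> E[Y(b) | X = x] *)
  (forall b, cond_exp_version P (Y b) X (m b)) ->
  (* deterministic treatment: support partitioned into X_0, X_1 *)
  law_support P X = Xd false `|` Xd true ->
  Xd false `&` Xd true = set0 ->
  (* continuity on the support *)
  (forall b, {within law_support P X, continuous (m b)}) ->
  (* comonotonicity *)
  (forall x1 x2, law_support P X x1 -> law_support P X x2 ->
     (m false x2 <= m false x1 <-> m true x2 <= m true x1)) ->
  (* g_b agrees with E[Y | X = x] = E[Y(b) | X = x] on X_b ... *)
  (forall b x, Xd b x -> g b x = m b x) ->
  (* ... and g_b, as a function on X_b ∪ F, is continuous at each point of F *)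
  (forall b x, frontier_set (Xd false) (Xd true) x ->
     (g b @ within (Xd b `|` frontier_set (Xd false) (Xd true)) (nbhs x))
       --> g b x) ->
  (* (i) *)
  (forall b x xs, Xd b x -> frontier_set (Xd false) (Xd true) xs ->
     m b x = g b xs -> m true x = g true xs /\ m false x = g false xs) /\
  (* (ii) *)
  (forall x1 x2, frontier_set (Xd false) (Xd true) x1 ->
     frontier_set (Xd false) (Xd true) x2 ->
     (g false x2 <= g false x1 <-> g true x2 <= g true x1)).
Proof.
move=> _ _ _ Hsupp _ Hcont Hcom Hgm Hgc.
set F := frontier_set (Xd false) (Xd true).
have Xsupp : forall b x, Xd b x -> law_support P X x.
  by move=> b x Hx; rewrite Hsupp; case: b Hx => Hx; [right|left].
have Fsupp : forall xs, F xs -> law_support P X xs.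
  move=> xs [H1 _] U oU Uxs.
  have [y [Iy Uy]] := H1 U (open_nbhs_nbhs (conj oU Uxs)).
  exact: (Xsupp true y (interior_subset Iy) U oU Uy).
have Fcl : forall b xs, F xs -> closure (Xd b) xs.
  move=> b xs [H1 H0]; case: b.
  - exact: (closureS (@interior_subset _ _) H1).
  - exact: (closureS (@interior_subset _ _) H0).
have key : forall b xs, F xs -> g b xs = m b xs.
  move=> b xs Fxs.
  have PG : ProperFilter (within (Xd b) (nbhs xs)).
    exact: (@within_nbhs_proper _ _ _ (Fcl b xs Fxs)).
  have h1 : g b @ within (Xd b) (nbhs xs) --> g b xs.
    apply: cvg_trans (Hgc b xs Fxs).
    apply: cvg_fmap2; apply: within_subset => y Hy; by left.
  have h2 : m b @ within (Xd b) (nbhs xs) --> m b xs.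
    have := (proj1 (subspace_continuousP _ _) (Hcont b)) xs (Fsupp xs Fxs).
    apply: cvg_trans; apply: cvg_fmap2; apply: within_subset.
    exact: Xsupp.
  have h3 : g b @ within (Xd b) (nbhs xs) --> m b xs.
    apply: cvg_trans h2; apply: fmap_within_eq => y; rewrite inE => Hy.
    exact: Hgm.
  exact: (cvg_unique (@Rhausdorff R) h1 h3).
split.
- move=> b x xs Hx Fxs Heq.
  have Sx := Xsupp b x Hx.
  have Sxs := Fsupp xs Fxs.
  rewrite !key //.
  have Hb : m b x = m b xs by rewrite Heq key.
  have Hc1 := Hcom x xs Sx Sxs.
  have Hc2 := Hcom xs x Sxs Sx.
  case: b Hb {Heq Hx} => Hb; split => //; apply/eqP; rewrite eq_le.
  + by apply/andP; split; [apply/Hc2; rewrite Hb | apply/Hc1; rewrite Hb].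
  + by apply/andP; split; [apply/Hc2; rewrite Hb | apply/Hc1; rewrite Hb].
- move=> x1 x2 F1 F2; rewrite !key //.
  exact: Hcom (Fsupp _ F1) (Fsupp _ F2).
Qed.
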